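(* Let $\lambda\in\mathbb{C}$ with $|\lambda|>1$, and let $g,h\in \mathrm{SL}(2,\mathbb{C})$ be $$g=\begin{pmatrix}\lambda&0\\0&\lambda^{-1}\end{pmatrix},\qquad h=\begin{pmatrix}a&b\\c&d\end{pmatrix}.$$ Put $M_g=|\lambda-1|+|\lambda^{-1}-1|$ and suppose $M_g<1$. If $$|abcd|^{1/2}\le \frac{1-M_g}{M_g^2},$$ then the subgroup $\langle g,h\rangle$ is either elementary or not discrete.
   Context: A subgroup of $\mathrm{SL}(2,\mathbb{C})$ is discrete if it is discrete in the matrix topology. It is elementary if its action on $\mathbb{H}^3\cup\partial\mathbb{H}^3$ (via Möbius transformations) has a finite orbit; otherwise it is non-elementary. Since $|\lambda|>1$, $g$ is loxodromic. *)

(* Defs.v *)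
From Stdlib Require Import Reals List.
Open Scope R_scope.

Record Cx : Type := mkC { Re : R; Im : R }.

Definition Czero : Cx := mkC 0 0.
Definition Cone : Cx := mkC 1 0.
Definition Cadd (z w : Cx) : Cx := mkC (Re z + Re w) (Im z + Im w).
Definition Copp (z : Cx) : Cx := mkC (- Re z) (- Im z).
Definition Csub (z w : Cx) : Cx := Cadd z (Copp w).
Definition Cmul (z w : Cx) : Cx :=
  mkC (Re z * Re w - Im z * Im w) (Re z * Im w + Im z * Re w).
Definition Cconj (z : Cx) : Cx := mkC (Re z) (- Im z).
Definition Cnorm2 (z : Cx) : R := Re z * Re z + Im z * Im z.
Definition Cabs (z : Cx) : R := sqrt (Cnorm2 z).
Definition Cscale (r : R) (z : Cx) : Cx := mkC (r * Re z) (r * Im z).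
Definition Cinv (z : Cx) : Cx := Cscale (/ Cnorm2 z) (Cconj z).
Definition Cdiv (z w : Cx) : Cx := Cmul z (Cinv w).
Definition RtoC (r : R) : Cx := mkC r 0.

Definition Ceq_dec (z w : Cx) : {z = w} + {z <> w}.
Proof.
  destruct z as [x y], w as [x' y'].
  destruct (Req_EM_T x x') as [e1|n1]; [destruct (Req_EM_T y y') as [e2|n2]|].
  - left; subst; reflexivity.
  - right; intros H; inversion H; contradiction.
  - right; intros H; inversion H; contradiction.
Defined.

(** 2x2 complex matrices [[ma, mb], [mc, md]]. *)
Record Mat : Type := mkM { ma : Cx; mb : Cx; mc : Cx; md : Cx }.

Definition Mid : Mat := mkM Cone Czero Czero Cone.
Definition Mmul (x y : Mat) : Mat :=
  mkM (Cadd (Cmul (ma x) (ma y)) (Cmul (mb x) (mc y)))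
      (Cadd (Cmul (ma x) (mb y)) (Cmul (mb x) (md y)))
      (Cadd (Cmul (mc x) (ma y)) (Cmul (md x) (mc y)))
      (Cadd (Cmul (mc x) (mb y)) (Cmul (md x) (md y))).
Definition Mdet (x : Mat) : Cx := Csub (Cmul (ma x) (md x)) (Cmul (mb x) (mc x)).
Definition Minv (x : Mat) : Mat :=
  let k := Cinv (Mdet x) in
  mkM (Cmul k (md x)) (Cmul k (Copp (mb x))) (Cmul k (Copp (mc x))) (Cmul k (ma x)).

Definition Mdist (x y : Mat) : R :=
  sqrt (Cnorm2 (Csub (ma x) (ma y)) + Cnorm2 (Csub (mb x) (mb y))
        + Cnorm2 (Csub (mc x) (mc y)) + Cnorm2 (Csub (md x) (md y))).

Inductive gen2 (g h : Mat) : Mat -> Prop :=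
| gen2_id : gen2 g h Mid
| gen2_g : gen2 g h g
| gen2_h : gen2 g h h
| gen2_ginv : gen2 g h (Minv g)
| gen2_hinv : gen2 g h (Minv h)
| gen2_mul : forall x y, gen2 g h x -> gen2 g h y -> gen2 g h (Mmul x y).

Definition discrete (G : Mat -> Prop) : Prop :=
  forall x, G x -> exists eps, 0 < eps /\
    forall y, G y -> Mdist x y < eps -> y = x.

(** Points of H^3 ∪ ∂H^3, upper half-space model:
    [Hyp z t] is z + t j with t > 0, [Bd z] a finite boundary point, [Inf] = ∞. *)
Inductive Pt : Type :=
| Hyp (z : Cx) (t : R)
| Bd (z : Cx)
| Inf.

Definition valid_pt (p : Pt) : Prop :=
  match p with Hyp _ t => 0 < t | _ => True end.

(** Action of an element of SL(2,Cx) by Möbius transformations (Poincaré extension). *)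
Definition act (m : Mat) (p : Pt) : Pt :=
  let a := ma m in let b := mb m in let c := mc m in let d := md m in
  match p with
  | Inf => if Ceq_dec c Czero then Inf else Bd (Cdiv a c)
  | Bd z =>
      let den := Cadd (Cmul c z) d in
      if Ceq_dec den Czero then Inf else Bd (Cdiv (Cadd (Cmul a z) b) den)
  | Hyp z t =>
      let w := Cadd (Cmul c z) d in
      let D := Cnorm2 w + Cnorm2 c * (t * t) in
      Hyp (Cscale (/ D) (Cadd (Cmul (Cadd (Cmul a z) b) (Cconj w))
                              (Cscale (t * t) (Cmul a (Cconj c)))))
          (t / D)
  end.

Definition elementary (G : Mat -> Prop) : Prop :=
  exists p, valid_pt p /\
    exists l : list Pt, forall x, G x -> In (act x p) l.

(* Main.v *)
Require Import Defs.
From Stdlib Require Import Reals List Lra Psatz Classical.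
From Coquelicot Require Import Coquelicot.
Import Defs.
Open Scope R_scope.

Definition tc (z : Cx) : Complex.C := (Re z, Im z).
Definition fc (z : Complex.C) : Cx := mkC (fst z) (snd z).

Lemma tc_fc z : tc (fc z) = z. Proof. destruct z; reflexivity. Qed.
Lemma tc_inj z w : tc z = tc w -> z = w.
Proof. destruct z, w; unfold tc; simpl; intros H; inversion H; reflexivity. Qed.

Lemma tc_add z w : tc (Cadd z w) = (tc z + tc w)%C.
Proof. destruct z, w; reflexivity. Qed.
Lemma tc_mul z w : tc (Cmul z w) = (tc z * tc w)%C.
Proof. destruct z, w; reflexivity. Qed.
Lemma tc_opp z : tc (Copp z) = (- tc z)%C.
Proof. destruct z; reflexivity. Qed.
Lemma tc_sub z w : tc (Csub z w) = (tc z - tc w)%C.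
Proof. destruct z, w; reflexivity. Qed.
Lemma tc_inv z : tc (Cinv z) = (/ tc z)%C.
Proof. destruct z as [x y]; unfold tc, Defs.Cinv, Cscale, Cconj, Cnorm2, Complex.Cinv; simpl.
  replace (x * (x * 1) + y * (y * 1)) with (x*x+y*y) by ring; unfold Rdiv; f_equal; ring. Qed.
Lemma tc_zero : tc Czero = 0%C. Proof. reflexivity. Qed.
Lemma tc_one : tc Cone = 1%C. Proof. reflexivity. Qed.
Lemma Cabs_mod z : Cabs z = Cmod (tc z).
Proof. destruct z as [x y]; unfold Cabs, Cmod, Cnorm2, tc; simpl. f_equal; ring. Qed.
Lemma Cnorm2_sub z w : sqrt (Cnorm2 (Csub z w)) = Cmod (tc z - tc w).
Proof. rewrite <- tc_sub. rewrite <- Cabs_mod. reflexivity. Qed.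

Definition A (m : Mat) := tc (ma m).
Definition B (m : Mat) := tc (mb m).
Definition Cc (m : Mat) := tc (mc m).
Definition D (m : Mat) := tc (md m).
Definition mkMC (a b c d : Complex.C) : Mat := mkM (fc a) (fc b) (fc c) (fc d).
Definition detC m := (A m * D m - B m * Cc m)%C.

Lemma Mat_ext x y : A x = A y -> B x = B y -> Cc x = Cc y -> D x = D y -> x = y.
Proof. destruct x, y; unfold A, B, Cc, D; simpl; intros; f_equal; apply tc_inj; auto. Qed.

Lemma A_mk a b c d : A (mkMC a b c d) = a. Proof. apply tc_fc. Qed.
Lemma B_mk a b c d : B (mkMC a b c d) = b. Proof. apply tc_fc. Qed.
Lemma C_mk a b c d : Cc (mkMC a b c d) = c. Proof. apply tc_fc. Qed.
Lemma D_mk a b c d : D (mkMC a b c d) = d. Proof. apply tc_fc. Qed.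

Lemma A_mul x y : A (Mmul x y) = (A x * A y + B x * Cc y)%C.
Proof. unfold A, B, Cc, Mmul; simpl; rewrite tc_add, !tc_mul; reflexivity. Qed.
Lemma B_mul x y : B (Mmul x y) = (A x * B y + B x * D y)%C.
Proof. unfold A, B, D, Mmul; simpl; rewrite tc_add, !tc_mul; reflexivity. Qed.
Lemma C_mul x y : Cc (Mmul x y) = (Cc x * A y + D x * Cc y)%C.
Proof. unfold A, D, Cc, Mmul; simpl; rewrite tc_add, !tc_mul; reflexivity. Qed.
Lemma D_mul x y : D (Mmul x y) = (Cc x * B y + D x * D y)%C.
Proof. unfold B, D, Cc, Mmul; simpl; rewrite tc_add, !tc_mul; reflexivity. Qed.
Lemma det_tc x : tc (Mdet x) = detC x.
Proof. unfold Mdet, detC; rewrite tc_sub, !tc_mul; reflexivity. Qed.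
Lemma A_inv x : A (Minv x) = (/ detC x * D x)%C.
Proof. unfold A, Minv; simpl; rewrite tc_mul, tc_inv, det_tc; reflexivity. Qed.
Lemma B_inv x : B (Minv x) = (/ detC x * - B x)%C.
Proof. unfold B, Minv; simpl; rewrite tc_mul, tc_inv, det_tc, tc_opp; reflexivity. Qed.
Lemma C_inv x : Cc (Minv x) = (/ detC x * - Cc x)%C.
Proof. unfold Cc, Minv; simpl; rewrite tc_mul, tc_inv, det_tc, tc_opp; reflexivity. Qed.
Lemma D_inv x : D (Minv x) = (/ detC x * A x)%C.
Proof. unfold D, A, Minv; simpl; rewrite tc_mul, tc_inv, det_tc; reflexivity. Qed.
Lemma A_id : A Mid = 1%C. Proof. reflexivity. Qed.
Lemma B_id : B Mid = 0%C. Proof. reflexivity. Qed.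
Lemma C_id : Cc Mid = 0%C. Proof. reflexivity. Qed.
Lemma D_id : D Mid = 1%C. Proof. reflexivity. Qed.

Ltac ent := repeat (rewrite ?A_mk, ?B_mk, ?C_mk, ?D_mk, ?A_mul, ?B_mul, ?C_mul, ?D_mul,
   ?A_inv, ?B_inv, ?C_inv, ?D_inv, ?A_id, ?B_id, ?C_id, ?D_id).


Lemma Cinv1 : (/ 1)%C = 1%C. Proof. field. Qed.

Lemma detC_mul x y : detC (Mmul x y) = (detC x * detC y)%C.
Proof. unfold detC; ent; ring. Qed.
Lemma detC_inv x : detC x = 1%C -> detC (Minv x) = 1%C.
Proof. intros H. unfold detC at 1. ent. rewrite H, Cinv1. unfold detC in H. transitivity (A x * D x - B x * Cc x)%C; [ring | exact H]. Qed.
Lemma inv_inv x : detC x = 1%C -> Minv (Minv x) = x.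
Proof. intros H. apply Mat_ext; ent; rewrite (detC_inv x H), H, Cinv1; ring. Qed.
Lemma inv_mul x y : detC x = 1%C -> detC y = 1%C -> Minv (Mmul x y) = Mmul (Minv y) (Minv x).
Proof. intros Hx Hy. apply Mat_ext; ent; rewrite detC_mul, Hx, Hy; field. Qed.
Lemma detC_id : detC Mid = 1%C. Proof. unfold detC; ent; ring. Qed.
Lemma inv_id : Minv Mid = Mid.
Proof. apply Mat_ext; ent; rewrite detC_id, Cinv1; ring. Qed.

Section Grp.
Variables g h : Mat.
Hypothesis Hg : detC g = 1%C.
Hypothesis Hh : detC h = 1%C.

Lemma Gdet x : gen2 g h x -> detC x = 1%C.
Proof. induction 1.
 - apply detC_id.
 - auto.
 - auto.
 - apply detC_inv; auto.
 - apply detC_inv; auto.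
 - rewrite detC_mul, IHgen2_1, IHgen2_2; ring.
Qed.

Lemma Ginv x : gen2 g h x -> gen2 g h (Minv x).
Proof. intros H. induction H.
 - rewrite inv_id; constructor.
 - constructor.
 - constructor.
 - rewrite inv_inv; auto; constructor.
 - rewrite inv_inv; auto; constructor.
 - rewrite inv_mul by (apply Gdet; auto). apply gen2_mul; auto.
Qed.
End Grp.


Lemma tc_div z w : tc (Cdiv z w) = (tc z * / tc w)%C.
Proof. unfold Cdiv. rewrite tc_mul, tc_inv. reflexivity. Qed.

Lemma Czero_iff z : z = Czero <-> tc z = 0%C.
Proof. split; intros H. subst; reflexivity. apply tc_inj; rewrite H; reflexivity. Qed.

Section Elem.
Variables g h : Mat.
Hypothesis Hg : detC g = 1%C.
Hypothesis Hh : detC h = 1%C.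
Hypothesis Bg : B g = 0%C.
Hypothesis Cg : Cc g = 0%C.

Lemma elem_c0 : Cc h = 0%C -> elementary (gen2 g h).
Proof.
  intros Ch.
  assert (Inv : forall x, gen2 g h x -> Cc x = 0%C).
  { induction 1; ent; auto; try rewrite Cg; try rewrite Ch;
      try rewrite IHgen2_1, IHgen2_2; try ring; reflexivity. }
  exists Inf. split. exact I. exists (Inf :: nil). intros x Hx.
  simpl. destruct (Ceq_dec (mc x) Czero) as [e|n]. left; reflexivity.
  exfalso. apply n. apply Czero_iff. apply Inv; auto.
Qed.

Lemma elem_b0 : B h = 0%C -> elementary (gen2 g h).
Proof.
  intros Bh.
  assert (Inv : forall x, gen2 g h x -> B x = 0%C).
  { induction 1; ent; auto; try rewrite Bg; try rewrite Bh;
      try rewrite IHgen2_1, IHgen2_2; try ring; reflexivity. }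
  exists (Bd Czero). split. exact I. exists (Bd Czero :: nil). intros x Hx.
  pose proof (Gdet g h Hg Hh x Hx) as Hd. pose proof (Inv x Hx) as Hb.
  assert (Dn : D x <> 0%C).
  { intros E. unfold detC in Hd. rewrite E, Hb in Hd.
    assert (Ht : (A x * 0 - 0 * Cc x)%C = 0%C) by ring. rewrite Ht in Hd.
    apply C1_nz. rewrite <- Hd. reflexivity. }
  unfold act; cbv zeta. destruct (Ceq_dec (Cadd (Cmul (mc x) Czero) (md x)) Czero) as [e|n].
  - exfalso. apply Dn. apply Czero_iff in e. rewrite tc_add, tc_mul in e.
    fold (Cc x) (D x) in e. rewrite <- e. rewrite tc_zero. ring.
  - left. f_equal. symmetry. apply Czero_iff. rewrite tc_div, !tc_add, !tc_mul.
    fold (A x) (B x) (Cc x) (D x). rewrite Hb, tc_zero. ring.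
Qed.

Lemma elem_ad0 : A h = 0%C -> D h = 0%C -> elementary (gen2 g h).
Proof.
  intros Ah Dh.
  assert (Inv : forall x, gen2 g h x -> (B x = 0 /\ Cc x = 0)%C \/ (A x = 0 /\ D x = 0)%C).
  { induction 1; ent.
    - left; split; reflexivity.
    - left; auto.
    - right; auto.
    - left; rewrite Bg, Cg; split; ring.
    - right; rewrite Ah, Dh; split; ring.
    - destruct IHgen2_1 as [[H1 H2]|[H1 H2]]; destruct IHgen2_2 as [[H3 H4]|[H3 H4]];
      rewrite H1, H2, H3, H4; [left|right|right|left]; split; ring. }
  exists Inf. split. exact I. exists (Inf :: Bd Czero :: nil). intros x Hx.
  simpl. destruct (Ceq_dec (mc x) Czero) as [e|n]. left; reflexivity.
  right; left. f_equal. destruct (Inv x Hx) as [[H1 H2]|[H1 H2]].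
  - exfalso; apply n; apply Czero_iff; exact H2.
  - symmetry. apply Czero_iff. rewrite tc_div. fold (A x). rewrite H1. ring.
Qed.
End Elem.


Lemma sqrt_add_le p q : 0 <= p -> 0 <= q -> sqrt (p + q) <= sqrt p + sqrt q.
Proof. intros Hp Hq. rewrite <- (sqrt_square (sqrt p + sqrt q)).
  2:{ pose proof (sqrt_pos p); pose proof (sqrt_pos q); lra. }
  apply sqrt_le_1_alt. pose proof (sqrt_sqrt p Hp); pose proof (sqrt_sqrt q Hq).
  pose proof (sqrt_pos p); pose proof (sqrt_pos q). nra. Qed.

Lemma Cnorm2_pos z : 0 <= Cnorm2 z.
Proof. unfold Cnorm2. nra. Qed.

Lemma Mdist_le x y : Mdist x y <= Cmod (A x - A y) + Cmod (B x - B y) + Cmod (Cc x - Cc y) + Cmod (D x - D y).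
Proof. unfold Mdist. unfold A, B, Cc, D. rewrite <- !Cnorm2_sub.
  pose proof (Cnorm2_pos (Csub (ma x) (ma y))). pose proof (Cnorm2_pos (Csub (mb x) (mb y))).
  pose proof (Cnorm2_pos (Csub (mc x) (mc y))). pose proof (Cnorm2_pos (Csub (md x) (md y))).
  eapply Rle_trans. apply sqrt_add_le; lra.
  apply Rplus_le_compat_r. eapply Rle_trans. apply sqrt_add_le; lra.
  apply Rplus_le_compat_r. apply sqrt_add_le; lra. Qed.

Definition dg (m : Complex.C) := mkMC m 0 0 (/ m)%C.

Lemma detC_dg (m : Complex.C) : m <> 0%C -> detC (dg m) = 1%C.
Proof. intros. unfold detC, dg; ent. field. auto. Qed.

Lemma Cmod_ne0 (z : Complex.C) : z <> 0%C -> 0 < Cmod z.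
Proof. intros; apply Cmod_gt_0; auto. Qed.

Lemma Cmod_z (x : Complex.C) : x = 0%C -> Cmod x = 0.
Proof. intros ->. apply Cmod_0. Qed.

Lemma Cinv_nz (z : Complex.C) : z <> 0%C -> (/ z)%C <> 0%C.
Proof. intros Hz E. apply C1_nz. rewrite <- (Cinv_l z Hz), E. ring. Qed.

Section ND.
Variables g h : Mat.
Hypothesis Hg : detC g = 1%C.
Hypothesis Hh : detC h = 1%C.
Notation G := (gen2 g h).

Lemma conj_dg (m : Complex.C) f : m <> 0%C -> G (dg m) -> G f ->
  G (mkMC (A f) (m * m * B f)%C (Cc f / (m * m))%C (D f)).
Proof. intros Hm Hd Hf.
  replace (mkMC _ _ _ _) with (Mmul (Mmul (dg m) f) (Minv (dg m))).
  - apply gen2_mul. apply gen2_mul; auto. apply Ginv; auto.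
  - apply Mat_ext; ent; rewrite ?detC_dg by auto; unfold dg; ent; field; auto.
Qed.

Lemma pow_dg (m : Complex.C) n : m <> 0%C -> G (dg m) -> G (dg (m ^ n)).
Proof. intros Hm Hd. induction n.
  - replace (dg (m ^ 0)) with Mid. constructor. apply Mat_ext; unfold dg; ent; simpl; field.
  - replace (dg (m ^ S n)) with (Mmul (dg m) (dg (m ^ n))). apply gen2_mul; auto.
    pose proof (Cpow_nz m n Hm). apply Mat_ext; unfold dg; ent; rewrite ?Cpow_S; field; auto.
Qed.

Lemma acc_nd x : G x -> (forall eps, 0 < eps -> exists y, G y /\ y <> x /\ Mdist x y < eps) -> ~ discrete G.
Proof. intros Hx H Hd. destruct (Hd x Hx) as [eps [He Hy]].
  destruct (H eps He) as [y [Gy [ny dy]]]. apply ny. apply Hy; auto. Qed.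

Lemma small_pow (r K eps : R) : 0 <= r < 1 -> 0 < eps -> exists n, r ^ n * K < eps.
Proof. intros Hr He. destruct (pow_lt_1_zero r ltac:(rewrite Rabs_pos_eq; lra) (eps / (Rabs K + 1)))
  as [N HN]. { apply Rdiv_lt_0_compat; auto. pose proof (Rabs_pos K); lra. }
  exists N. specialize (HN N (le_n N)). rewrite Rabs_pos_eq in HN by (apply pow_le; lra).
  pose proof (Rabs_pos K). pose proof (Rle_abs K). pose proof (pow_le r N ltac:(lra)).
  apply Rmult_lt_compat_r with (r := Rabs K + 1) in HN; [|lra].
  unfold Rdiv in HN. rewrite Rmult_assoc, Rinv_l in HN by lra. nra. Qed.

Lemma upper_nd (m : Complex.C) f : m <> 0%C -> G (dg m) -> Cmod m < 1 -> G f -> Cc f = 0%C -> B f <> 0%C -> ~ discrete G.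
Proof. intros Hm Hd Hm1 Hf Cf Bf.
  pose proof (Gdet g h Hg Hh f Hf) as Hdf. unfold detC in Hdf. rewrite Cf in Hdf.
  set (f1 := mkMC (A f) (m * m * B f)%C (Cc f / (m * m))%C (D f)).
  assert (Hf1 : G f1) by (apply conj_dg; auto).
  set (gam := (D f * B f * (1 - m * m))%C).
  assert (Hp : G (mkMC 1 gam 0 1)).
  { replace (mkMC 1 gam 0 1) with (Mmul (Minv f1) f). apply gen2_mul; auto. apply Ginv; auto.
    pose proof (Gdet g h Hg Hh f1 Hf1) as E1.
    apply Mat_ext; ent; rewrite E1; unfold f1, gam; ent; rewrite ?Cf;
    first [ (transitivity (A f * D f - B f * 0)%C; [field; auto | exact Hdf]) | (field; auto) ]. }
  assert (Dn : D f <> 0%C). { intros E. rewrite E in Hdf. apply C1_nz. rewrite <- Hdf. ring. }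
  assert (Gn : gam <> 0%C).
  { unfold gam. apply Cmult_neq_0. apply Cmult_neq_0; auto.
    intros E. assert (Cmod (m * m)%C = 1). { replace (m*m)%C with (Complex.RtoC 1). apply Cmod_1.
      rewrite <- (Cplus_0_l (m*m)%C), <- E. ring. }
    rewrite Cmod_mult in H. pose proof (Cmod_ge_0 m). nra. }
  apply (acc_nd Mid). constructor. intros eps He.
  destruct (small_pow (Cmod m * Cmod m) (Cmod gam) eps) as [n Hn]; auto.
  { pose proof (Cmod_ge_0 m). split; nra. }
  pose proof (Cpow_nz m n Hm) as Mn.
  exists (mkMC 1 (m ^ n * m ^ n * gam)%C (0 / (m ^ n * m ^ n))%C 1). split; [|split].
  - pose proof (conj_dg (m ^ n) _ Mn (pow_dg m n Hm Hd) Hp) as Hq.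
    rewrite A_mk, B_mk, C_mk, D_mk in Hq. exact Hq.
  - intros E. apply (f_equal B) in E. ent. revert E. apply Cmult_neq_0; auto. apply Cmult_neq_0; auto.
  - eapply Rle_lt_trans. apply Mdist_le. ent.
    rewrite (Cmod_z (1 - 1)%C) by ring. rewrite (Cmod_z (0 - 0/(m^n*m^n))%C) by (field; auto).
    replace (0 - m ^ n * m ^ n * gam)%C with (- (m ^ n * m ^ n * gam))%C by ring.
    rewrite Cmod_opp, !Cmod_mult, Cmod_pow. rewrite <- Rpow_mult_distr. lra.
Qed.

Lemma lower_nd (m : Complex.C) f : m <> 0%C -> G (dg m) -> 1 < Cmod m -> G f -> B f = 0%C -> Cc f <> 0%C -> ~ discrete G.
Proof. intros Hm Hd Hm1 Hf Bf Cf.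
  pose proof (Gdet g h Hg Hh f Hf) as Hdf. unfold detC in Hdf. rewrite Bf in Hdf.
  set (f1 := mkMC (A f) (m * m * B f)%C (Cc f / (m * m))%C (D f)).
  assert (Hf1 : G f1) by (apply conj_dg; auto).
  set (gam := (A f * Cc f * (1 - / (m * m)))%C).
  assert (Hp : G (mkMC 1 0 gam 1)).
  { replace (mkMC 1 0 gam 1) with (Mmul (Minv f1) f). apply gen2_mul; auto. apply Ginv; auto.
    pose proof (Gdet g h Hg Hh f1 Hf1) as E1.
    apply Mat_ext; ent; rewrite E1; unfold f1, gam; ent; rewrite ?Bf;
    first [ (transitivity (A f * D f - 0 * Cc f)%C; [field; auto | exact Hdf]) | (field; auto) ]. }
  assert (An : A f <> 0%C). { intros E. rewrite E in Hdf. apply C1_nz. rewrite <- Hdf. ring. }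
  assert (Gn : gam <> 0%C).
  { unfold gam. apply Cmult_neq_0. apply Cmult_neq_0; auto.
    intros E. assert (Cmod (m * m)%C = 1). { replace (m*m)%C with (Complex.RtoC 1). apply Cmod_1.
      assert (m * m <> 0)%C by (apply Cmult_neq_0; auto).
      assert (H1 : (m*m - 1 = m*m*(1 - /(m*m)))%C) by (field; auto).
      rewrite E, Cmult_0_r in H1.
      replace (m*m)%C with ((m*m - 1) + 1)%C by ring. rewrite H1. ring. }
    rewrite Cmod_mult in H. pose proof (Cmod_ge_0 m). nra. }
  apply (acc_nd Mid). constructor. intros eps He.
  assert (mpos : 0 < Cmod m) by lra.
  destruct (small_pow (/ (Cmod m * Cmod m)) (Cmod gam) eps) as [n Hn]; auto.
  { split. apply Rlt_le, Rinv_0_lt_compat; nra. rewrite <- Rinv_1. apply Rinv_lt_contravar; nra. }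
  pose proof (Cpow_nz m n Hm) as Mn.
  exists (mkMC 1 (m ^ n * m ^ n * 0)%C (gam / (m ^ n * m ^ n))%C 1). split; [|split].
  - pose proof (conj_dg (m ^ n) _ Mn (pow_dg m n Hm Hd) Hp) as Hq.
    rewrite A_mk, B_mk, C_mk, D_mk in Hq. exact Hq.
  - intros E. apply (f_equal Cc) in E. ent. revert E. unfold Cdiv. apply Cmult_neq_0; auto.
    apply Cinv_nz. apply Cmult_neq_0; auto.
  - eapply Rle_lt_trans. apply Mdist_le. ent.
    rewrite (Cmod_z (1 - 1)%C) by ring. rewrite (Cmod_z (0 - m^n*m^n*0)%C) by ring.
    replace (0 - gam / (m ^ n * m ^ n))%C with (- (gam / (m ^ n * m ^ n)))%C by ring.
    rewrite Cmod_opp, Cmod_div by (apply Cmult_neq_0; auto). rewrite !Cmod_mult, Cmod_pow.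
    rewrite pow_inv, Rpow_mult_distr in Hn. unfold Rdiv. rewrite Rmult_comm. lra.
Qed.
End ND.


Lemma bal_real (rho q : R) : 1 < rho -> 0 < q -> exists j : nat,
  (q * rho ^ j <= 1 < rho * (q * rho ^ j)) \/ (q * / rho ^ j <= 1 < rho * (q * / rho ^ j)).
Proof. intros Hr Hq.
  assert (unb : forall K, exists N, K < rho ^ N).
  { intros K. destruct (small_pow (/ rho) (Rabs K + 1) 1) as [N HN]; try lra.
    split. apply Rlt_le, Rinv_0_lt_compat; lra. rewrite <- Rinv_1. apply Rinv_lt_contravar; lra.
    exists N. rewrite pow_inv in HN. pose proof (pow_lt rho N ltac:(lra)).
    pose proof (Rle_abs K). apply Rmult_lt_compat_l with (r := rho ^ N) in HN; auto.
    rewrite <- Rmult_assoc, Rinv_r in HN by lra. lra. }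
  destruct (Rle_lt_dec q 1) as [H1|H1].
  - destruct (unb (/ q)) as [N HN].
    assert (HN' : 1 < q * rho ^ N).
    { apply Rmult_lt_compat_l with (r := q) in HN; auto. rewrite Rinv_r in HN; lra. }
    clear HN. induction N as [|N IH].
    + simpl in HN'. lra.
    + destruct (Rle_lt_dec (q * rho ^ N) 1) as [H2|H2].
      * exists N. left. split; auto. simpl in HN'. lra.
      * apply IH; auto.
  - destruct (unb q) as [N HN].
    assert (HN' : q * / rho ^ N <= 1).
    { pose proof (pow_lt rho N ltac:(lra)). apply Rmult_le_reg_r with (r := rho ^ N); auto.
      rewrite Rmult_assoc, Rinv_l by lra. lra. }
    clear HN. induction N as [|N IH].
    + simpl in HN'. rewrite Rinv_1 in HN'. lra.
    + destruct (Rle_lt_dec (q * / rho ^ N) 1) as [H2|H2].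
      * apply IH; auto.
      * exists (S N). right. split; auto. simpl. pose proof (pow_lt rho N ltac:(lra)).
        replace (rho * (q * / (rho * rho ^ N))) with (q * / rho ^ N) by (field; lra). lra.
Qed.

Fixpoint hs (g h : Mat) (n : nat) : Mat :=
  match n with O => h | S k => Mmul (Mmul (hs g h k) g) (Minv (hs g h k)) end.

Section Jor.
Variables (g h : Mat) (L : Complex.C).
Hypothesis HgA : A g = L.
Hypothesis HgB : B g = 0%C.
Hypothesis HgC : Cc g = 0%C.
Hypothesis HgD : D g = (/ L)%C.
Hypothesis HL : 1 < Cmod L.
Hypothesis Hh : detC h = 1%C.
Notation G := (gen2 g h).

Lemma Lnz : L <> 0%C.
Proof. intros E. rewrite E, Cmod_0 in HL. lra. Qed.

Lemma Hg : detC g = 1%C.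
Proof. unfold detC. rewrite HgA, HgB, HgC, HgD. field. apply Lnz. Qed.

Lemma hs_G n : G (hs g h n).
Proof. induction n; simpl. constructor. apply gen2_mul. apply gen2_mul; auto. constructor.
  apply Ginv; auto. apply Hg. Qed.

Lemma hs_det n : detC (hs g h n) = 1%C.
Proof. apply (Gdet g h Hg Hh), hs_G. Qed.

Definition T := (L - / L)%C.
Definition xs n := (B (hs g h n) * Cc (hs g h n))%C.

Lemma ad_eq n : (A (hs g h n) * D (hs g h n) = 1 + xs n)%C.
Proof. pose proof (hs_det n) as H. unfold detC in H. unfold xs. rewrite <- H. ring. Qed.

Ltac stp n := pose proof (ad_eq n) as Had; pose proof (hs_det n) as Hdt; pose proof Lnz as Hlz;
  simpl; ent; rewrite ?Hdt, ?HgA, ?HgB, ?HgC, ?HgD; unfold T.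

Lemma A_S n : A (hs g h (S n)) = (L + xs n * T)%C.
Proof. stp n. transitivity (A (hs g h n) * D (hs g h n) * L - xs n * / L)%C.
  unfold xs; field; auto. rewrite Had. unfold T; field; auto. Qed.
Lemma D_S n : D (hs g h (S n)) = (/ L - xs n * T)%C.
Proof. stp n. transitivity (A (hs g h n) * D (hs g h n) * / L - xs n * L)%C.
  unfold xs; field; auto. rewrite Had. unfold T; field; auto. Qed.
Lemma B_S n : B (hs g h (S n)) = (- A (hs g h n) * B (hs g h n) * T)%C.
Proof. stp n. field; auto. Qed.
Lemma C_S n : Cc (hs g h (S n)) = (Cc (hs g h n) * D (hs g h n) * T)%C.
Proof. stp n. field; auto. Qed.
Lemma xs_S n : xs (S n) = (- xs n * (1 + xs n) * T * T)%C.
Proof. unfold xs at 1. rewrite B_S, C_S. rewrite <- ad_eq. unfold xs. ring. Qed.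

Lemma Cmult_zero (a b : Complex.C) : (a * b = 0)%C -> a = 0%C \/ b = 0%C.
Proof. intros H. destruct (classic (a = 0%C)) as [Ha|Ha]; auto. right.
  replace b with (/ a * (a * b))%C by (field; auto). rewrite H. ring. Qed.

Lemma sq1_false (z : Complex.C) : Cmod z <> 1 -> (z * z)%C <> 1%C.
Proof. intros Hz E. apply Hz. assert (H : Cmod (z * z)%C = 1) by (rewrite E; apply Cmod_1).
  rewrite Cmod_mult in H. pose proof (Cmod_ge_0 z). nra. Qed.

Lemma T_nz : T <> 0%C.
Proof. intros E. apply (sq1_false L). lra. pose proof Lnz.
  replace (L * L)%C with (L * T + 1)%C by (unfold T; field; auto). rewrite E. ring. Qed.

Lemma tr_nz : (L + / L)%C <> 0%C.
Proof. intros E. apply (sq1_false (L * Ci)%C). rewrite Cmod_mult.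
  replace (Cmod Ci) with 1. lra. unfold Cmod, Ci; simpl. rewrite <- sqrt_1 at 1. f_equal; ring. pose proof Lnz.
  assert (Ci2 : (Ci * Ci)%C = (-1)%C) by (unfold Ci; apply injective_projections; simpl; ring).
  replace (L * Ci * (L * Ci))%C with (- (L * (L + / L)) + 1)%C.
  rewrite E. ring. transitivity (L * L * (Ci * Ci))%C; [|ring]. rewrite Ci2. field; auto. Qed.

Lemma dgL : dg L = g.
Proof. apply Mat_ext; unfold dg; ent; rewrite ?HgA, ?HgB, ?HgC, ?HgD; reflexivity. Qed.
Lemma dgLi : dg (/ L) = Minv g.
Proof. pose proof Lnz. apply Mat_ext; unfold dg; ent; rewrite Hg, ?HgA, ?HgB, ?HgC, ?HgD; field; auto. Qed.

Lemma Linv_lt : Cmod (/ L) < 1.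
Proof. rewrite Cmod_inv by apply Lnz. rewrite <- Rinv_1. apply Rinv_lt_contravar; lra. Qed.

Lemma nz_all : discrete G -> xs 0 <> 0%C -> ~ (A h = 0%C /\ D h = 0%C) ->
  forall n, xs n <> 0%C /\ ~ (A (hs g h n) = 0%C /\ D (hs g h n) = 0%C).
Proof. intros Hd H0 H0'. induction n as [|n [IH1 IH2]]. split; auto.
  pose proof T_nz as Tn. pose proof Lnz as Lz.
  assert (Bn : B (hs g h n) <> 0%C). { intros E; apply IH1; unfold xs; rewrite E; ring. }
  assert (Cn : Cc (hs g h n) <> 0%C). { intros E; apply IH1; unfold xs; rewrite E; ring. }
  destruct (classic ((1 + xs n) = 0)%C) as [E|E].
  - exfalso. rewrite <- ad_eq in E. apply Cmult_zero in E. destruct E as [E|E].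
    + assert (Dn : D (hs g h n) <> 0%C) by (intros E'; apply IH2; auto).
      apply (lower_nd g h Hg Hh L (hs g h (S n))); auto.
      rewrite dgL; constructor. apply hs_G. rewrite B_S, E; ring.
      rewrite C_S. apply Cmult_neq_0; auto. apply Cmult_neq_0; auto.
    + assert (An : A (hs g h n) <> 0%C) by (intros E'; apply IH2; auto).
      apply (upper_nd g h Hg Hh (/ L) (hs g h (S n))); auto.
      apply Cinv_nz; auto. rewrite dgLi; constructor. apply Linv_lt. apply hs_G. rewrite C_S, E; ring.
      rewrite B_S. apply Cmult_neq_0; auto. apply Cmult_neq_0; auto.
      intros E'. apply An. replace (A (hs g h n)) with (- - A (hs g h n))%C by ring. rewrite E'. ring.
  - split.
    + rewrite xs_S. apply Cmult_neq_0; auto. apply Cmult_neq_0; auto. apply Cmult_neq_0; auto.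
      intros E'. apply IH1. replace (xs n) with (- - xs n)%C by ring. rewrite E'. ring.
    + intros [E1 E2]. apply tr_nz. rewrite A_S in E1. rewrite D_S in E2.
      replace (L + / L)%C with ((L + xs n * T) + (/ L - xs n * T))%C by ring. rewrite E1, E2. ring.
Qed.

Lemma pow_le_one (r : R) k : 0 <= r <= 1 -> r ^ k <= 1.
Proof. intros H. induction k; simpl. lra. pose proof (pow_le r k ltac:(lra)). nra. Qed.

Lemma pow_swap (x : R) (j k : nat) : (x ^ j) ^ k = (x ^ k) ^ j.
Proof. rewrite <- !pow_mult, Nat.mul_comm. reflexivity. Qed.

Lemma core : xs 0 <> 0%C -> ~ (A h = 0%C /\ D h = 0%C) ->
  Cmod T * Cmod T * (1 + Cmod (xs 1)) < 1 -> ~ discrete G.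
Proof.
  intros H0 H0' Hr Hd.
  pose proof (nz_all Hd H0 H0') as NZ.
  set (r := Cmod T * Cmod T * (1 + Cmod (xs 1))) in *.
  set (y0 := Cmod (xs 1)) in *.
  pose proof (Cmod_ge_0 T) as T0. pose proof (Cmod_ge_0 (xs 1)) as Y0. fold y0 in Y0.
  assert (r0 : 0 <= r) by (unfold r; nra).
  assert (T1 : Cmod T < 1) by (unfold r in Hr; nra).
  assert (bound : forall k, Cmod (xs (S k)) <= r ^ k * y0).
  { induction k as [|k IH]. simpl. unfold y0; lra.
    rewrite xs_S, !Cmod_mult, Cmod_opp.
    pose proof (Cmod_triangle 1 (xs (S k))) as Tr. rewrite Cmod_1 in Tr.
    pose proof (Cmod_ge_0 (xs (S k))). pose proof (Cmod_ge_0 (1 + xs (S k))%C).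
    assert (rk : r ^ k <= 1) by (apply pow_le_one; lra).
    pose proof (pow_le r k r0).
    assert (Hx : Cmod (xs (S k)) <= y0) by nra.
    assert (Cmod (xs (S k)) * Cmod (1 + xs (S k))%C <= Cmod (xs (S k)) * (1 + y0)) by nra.
    assert (Cmod (xs (S k)) * Cmod (1 + xs (S k))%C * Cmod T * Cmod T <= r * Cmod (xs (S k))).
    { unfold r. replace (Cmod T * Cmod T * (1 + y0) * Cmod (xs (S k))) with
        ((Cmod (xs (S k)) * (1 + y0)) * (Cmod T * Cmod T)) by ring.
      rewrite Rmult_assoc. apply Rmult_le_compat_r; nra. }
    simpl. nra. }
  pose proof HL as HL'. pose proof (Cmod_ge_0 L) as L0.
  set (rho := Cmod L ^ 4).
  assert (rho1 : 1 < rho).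
  { unfold rho. simpl. assert (1 < Cmod L * Cmod L) by nra.
    replace (Cmod L * (Cmod L * (Cmod L * (Cmod L * 1)))) with ((Cmod L * Cmod L) * (Cmod L * Cmod L)) by ring. nra. }
  apply (acc_nd g h g); [constructor | | exact Hd].
  intros eps He.
  set (eta := eps / (eps + 4 + rho)).
  assert (eta0 : 0 < eta) by (unfold eta; apply Rdiv_lt_0_compat; lra).
  assert (eta1 : eta < 1) by (unfold eta; apply Rmult_lt_reg_r with (r := eps + 4 + rho); [lra|];
     unfold Rdiv; rewrite Rmult_assoc, Rinv_l by lra; lra).
  assert (eta2 : (3 + rho) * eta < eps) by (unfold eta; apply Rmult_lt_reg_r with (r := eps + 4 + rho); [lra|];
     unfold Rdiv; replace ((3 + rho) * (eps * / (eps + 4 + rho)) * (eps + 4 + rho)) with ((3 + rho) * eps * ((eps + 4 + rho) * / (eps + 4 + rho))) by ring;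
     rewrite Rinv_r by lra; nra).
  destruct (small_pow r y0 (eta * eta)) as [n Hn]; [lra | nra |].
  assert (Y1 : Cmod (xs (S n)) < eta * eta) by (pose proof (bound n); lra).
  assert (Y2 : Cmod (xs (S (S n))) < eta * eta).
  { pose proof (bound (S n)). simpl in H. pose proof (pow_le r n r0).
    assert (0 <= r ^ n * y0) by (apply Rmult_le_pos; lra).
    assert (r * r ^ n * y0 <= r ^ n * y0) by nra. lra. }
  set (f := hs g h (S (S n))).
  assert (Bfn : B f <> 0%C). { intros E. apply (proj1 (NZ (S (S n)))). unfold xs; fold f; rewrite E; ring. }
  assert (Cfn : Cc f <> 0%C). { intros E. apply (proj1 (NZ (S (S n)))). unfold xs; fold f; rewrite E; ring. }
  pose proof (Cmod_ne0 _ Bfn) as b0. pose proof (Cmod_ne0 _ Cfn) as c0.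
  set (q := Cmod (B f) / Cmod (Cc f)).
  assert (Fin : forall m : Complex.C, m <> 0%C -> G (dg m) -> q * Cmod m ^ 4 <= 1 < rho * (q * Cmod m ^ 4) ->
     exists y, G y /\ y <> g /\ Mdist g y < eps).
  { intros m Hm Gm [Q1 Q2].
    exists (mkMC (A f) (m * m * B f)%C (Cc f / (m * m))%C (D f)). split; [|split].
    - apply (conj_dg g h Hg Hh); auto. apply hs_G.
    - intros E. apply (f_equal B) in E. rewrite B_mk, HgB in E. revert E.
      apply Cmult_neq_0; auto. apply Cmult_neq_0; auto.
    - eapply Rle_lt_trans. apply Mdist_le. rewrite A_mk, B_mk, C_mk, D_mk, HgA, HgB, HgC, HgD.
      unfold f. rewrite A_S, D_S.
      replace (L - (L + xs (S n) * T))%C with (- (xs (S n) * T))%C by ring.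
      replace (/ L - (/ L - xs (S n) * T))%C with (xs (S n) * T)%C by ring.
      replace (0 - m * m * B (hs g h (S (S n))))%C with (- (m * m * B (hs g h (S (S n)))))%C by ring.
      replace (0 - Cc (hs g h (S (S n))) / (m * m))%C with (- (Cc (hs g h (S (S n))) / (m * m)))%C by ring.
      assert (mm : (m * m)%C <> 0%C) by (apply Cmult_neq_0; auto).
      rewrite !Cmod_opp, Cmod_div by auto. rewrite !Cmod_mult. fold f.
      pose proof (Cmod_ne0 _ Hm) as mu0.
      set (mu := Cmod m) in *. set (b := Cmod (B f)) in *. set (c := Cmod (Cc f)) in *.
      set (X := mu * mu * b). set (Y := c / (mu * mu)).
      assert (XY : X * Y = Cmod (xs (S (S n)))).
      { unfold xs. fold f. rewrite Cmod_mult. fold b c. unfold X, Y. field. lra. }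
      assert (q4 : q * mu ^ 4 = X / Y).
      { unfold q, X, Y. fold b c. simpl. field. split; lra. }
      rewrite q4 in Q1, Q2.
      assert (X0 : 0 < X) by (unfold X; apply Rmult_lt_0_compat; [apply Rmult_lt_0_compat|]; lra).
      assert (Yp : 0 < Y) by (unfold Y; apply Rdiv_lt_0_compat; [lra | apply Rmult_lt_0_compat; lra]).
      assert (XleY : X <= Y).
      { apply Rmult_le_compat_r with (r := Y) in Q1; [|lra]. unfold Rdiv in Q1.
        rewrite Rmult_assoc, Rinv_l in Q1 by lra. lra. }
      assert (YltX : Y < rho * X).
      { apply Rmult_lt_compat_r with (r := Y) in Q2; [|lra]. unfold Rdiv in Q2.
        replace (rho * (X * / Y) * Y) with (rho * X * (/ Y * Y)) in Q2 by ring.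
        rewrite Rinv_l in Q2 by lra. lra. }
      assert (Xe : X < eta) by nra.
      assert (Ye : Y < rho * eta) by nra.
      pose proof (Cmod_ge_0 (xs (S n))).
      assert (Cmod (xs (S n)) * Cmod T <= eta * eta) by nra.
      nra. }
  destruct (bal_real rho q) as [j [[Q1 Q2]|[Q1 Q2]]]; auto.
  { unfold q; apply Rdiv_lt_0_compat; auto. }
  - apply (Fin (L ^ j)%C). apply Cpow_nz, Lnz. apply pow_dg. apply Lnz. rewrite dgL; constructor.
    rewrite Cmod_pow, pow_swap. fold rho. lra.
  - apply (Fin ((/ L) ^ j)%C). apply Cpow_nz, Cinv_nz, Lnz. apply pow_dg. apply Cinv_nz, Lnz.
    rewrite dgLi. constructor.
    rewrite Cmod_pow, pow_swap, Cmod_inv, pow_inv, pow_inv by apply Lnz. fold rho. lra.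
Qed.
End Jor.


Theorem theorem2 (lam a b c d : Cx) :
  1 < Cabs lam ->
  Mdet (mkM a b c d) = Cone ->
  let g := mkM lam Czero Czero (Cinv lam) in
  let h := mkM a b c d in
  let Mg := Cabs (Csub lam Cone) + Cabs (Csub (Cinv lam) Cone) in
  Mg < 1 ->
  sqrt (Cabs (Cmul (Cmul (Cmul a b) c) d)) <= (1 - Mg) / (Mg * Mg) ->
  elementary (gen2 g h) \/ ~ discrete (gen2 g h).
Proof.
  intros HL Hdet g h M HM Hs.
  set (L := tc lam).
  assert (HgA : A g = L) by reflexivity.
  assert (HgB : B g = 0%C) by reflexivity.
  assert (HgC : Cc g = 0%C) by reflexivity.
  assert (HgD : D g = (/ L)%C) by (apply tc_inv).
  rewrite Cabs_mod in HL. fold L in HL.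
  assert (Hh : detC h = 1%C) by (rewrite <- det_tc; unfold h; rewrite Hdet; reflexivity).
  pose proof (Hg g L HgA HgB HgC HgD HL) as Hgd.
  assert (Ah : A h = tc a) by reflexivity. assert (Bh : B h = tc b) by reflexivity.
  assert (Ch : Cc h = tc c) by reflexivity. assert (Dh : D h = tc d) by reflexivity.
  destruct (classic (tc c = 0%C)) as [c0|c0].
  { left. apply elem_c0; auto; rewrite Ch; auto. }
  destruct (classic (tc b = 0%C)) as [b0|b0].
  { left. apply elem_b0; auto; rewrite Bh; auto. }
  destruct (classic (tc a = 0%C /\ tc d = 0%C)) as [[a0 d0]|ad0].
  { left. apply elem_ad0; auto; try (rewrite Ah; auto); try (rewrite Dh; auto). }
  right. apply (core g h L HgA HgB HgC HgD HL Hh).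
  - unfold xs; simpl. rewrite Bh, Ch. apply Cmult_neq_0; auto.
  - rewrite Ah, Dh; auto.
  - rewrite (xs_S g h L HgA HgB HgC HgD HL Hh 0).
    rewrite <- (ad_eq g h L HgA HgB HgC HgD HL Hh 0). unfold xs. simpl.
    rewrite Ah, Bh, Ch, Dh.
    rewrite Cabs_mod, !tc_mul in Hs.
    set (S := Cmod (tc a * tc b * tc c * tc d)%C) in Hs.
    replace (Cmod (- (tc b * tc c) * (tc a * tc d) * T L * T L)%C) with (S * (Cmod (T L) * Cmod (T L))).
    2:{ unfold S. rewrite !Cmod_mult, Cmod_opp, !Cmod_mult. ring. }
    assert (TM : Cmod (T L) <= M).
    { unfold M. rewrite !Cabs_mod, !tc_sub, tc_inv, tc_one. fold L. unfold T.
      replace (L - / L)%C with ((L - 1) + - (/ L - 1))%C by ring.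
      eapply Rle_trans. apply Cmod_triangle. rewrite Cmod_opp. lra. }
    pose proof (T_nz L HL) as Tn. pose proof (Cmod_ne0 _ Tn) as T0.
    set (t := Cmod (T L)) in *.
    assert (S0 : 0 <= S) by apply Cmod_ge_0.
    pose proof (sqrt_sqrt S S0) as SS. pose proof (sqrt_pos S) as sp.
    set (s := sqrt S) in *.
    assert (M0 : 0 < M) by lra.
    assert (sM : s * (M * M) <= 1 - M).
    { apply Rmult_le_compat_r with (r := M * M) in Hs; [|nra]. unfold Rdiv in Hs.
      rewrite Rmult_assoc, Rinv_l in Hs by nra. lra. }
    assert (tt : t * t <= M * M) by nra.
    assert (st : s * (t * t) <= 1 - M).
    { eapply Rle_trans; [|exact sM]. apply Rmult_le_compat_l; lra. }
    assert (st0 : 0 <= s * (t * t)) by (apply Rmult_le_pos; nra).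
    assert (st2 : (s * (t * t)) * (s * (t * t)) <= (1 - M) * (1 - M)) by nra.
    replace (t * t * (1 + S * (t * t))) with (t * t + (s * (t * t)) * (s * (t * t))) by (rewrite <- SS; ring).
    nra.
Qed.
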